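(* In the permutation model $\mathcal{N}_{\mathbb{R}}$, the family $\mathcal{A}=\{A_n: n\in\omega\}$ is denumerable but has no partial multiple choice function. Consequently, $\mathbf{CAC}(\leq 2^{\aleph_0})$ is false in $\mathcal{N}_{\mathbb{R}}$.
   Context: Permutation model $\mathcal{N}_{\mathbb{R}}$: Let $\mathcal{M}$ be a model of $\mathbf{ZFA}+\mathbf{AC}$ whose set of atoms is $A=\bigcup_{n\in\omega}A_n$, a pairwise disjoint union, where $A_n=\{a_{n,x}:x\in\mathbb{R}\}$ and $x\mapsto a_{n,x}$ is a bijection (in $\mathcal{M}$). Let $\leq_n$ be the linear order on $A_n$ given by $a_{n,x}\leq_n a_{n,y}\iff x\le y$. Let $\mathcal{G}$ be the group of all permutations $\pi$ of $A$ such that for every $n$, $\pi\upharpoonright A_n$ is an order-automorphism of $\langle A_n,\leq_n\rangle$. Every permutation of $A$ extends to an $\in$-automorphism of $\mathcal{M}$. Let $\mathcal{I}$ be the ideal of all $E\subseteq A$ with $E\subseteq\bigcup_{n\in S}A_n$ for some finite $S\subseteq\omega$. For $x\in\mathcal{M}$, $\mathrm{sym}_{\mathcal{G}}(x)=\{\phi\in\mathcal{G}:\phi(x)=x\}$ and $\mathrm{fix}_{\mathcal{G}}(E)=\{\phi\in\mathcal{G}:\phi(t)=t \text{ for all } t\in E\}$. Then $\mathcal{N}_{\mathbb{R}}=\{x\in\mathcal{M}: \text{for every } t\in \mathrm{TC}(\{x\}) \text{ there is } E\in\mathcal{I} \text{ with } \mathrm{fix}_{\mathcal{G}}(E)\subseteq\mathrm{sym}_{\mathcal{G}}(t)\}$,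 where $\mathrm{TC}$ is transitive closure. A partial multiple choice function of a family $\{X_j:j\in J\}$ is a function $f$ defined on an infinite $I\subseteq J$ with $f(j)$ a non-empty finite subset of $X_j$ for $j\in I$. $\mathbf{CAC}(\leq 2^{\aleph_0})$: every denumerable family of non-empty sets, each equipotent to a subset of $\mathbb{R}$, has a choice function. *)

(* Defs.v *)
(* Concrete rendering of the permutation model N_R.
   Atoms: a_{n,x} is represented by the pair (n, x) : nat * R, so
   A_n = { (n,x) | x : R } and <=_n is the order of R on the second
   coordinate. *)
From Stdlib Require Import Reals List.
Open Scope R_scope.

Definition atom : Type := (nat * R)%type.

Definition A_ (n : nat) : atom -> Prop := fun a => fst a = n.

(* The group G: a permutation of the atoms whose restriction to every A_n is
   an order automorphism of (A_n, <=_n).  Such a permutation necessarily maps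
   each A_n onto itself, hence is given by a family h of order automorphisms
   of (R, <=). *)
Definition order_aut (g : R -> R) : Prop :=
  (forall x y, x <= y <-> g x <= g y) /\ (forall y, exists x, g x = y).

Definition in_G (h : nat -> R -> R) : Prop := forall n, order_aut (h n).

Definition act (h : nat -> R -> R) (a : atom) : atom := (fst a, h (fst a) (snd a)).

Definition img (h : nat -> R -> R) (X : atom -> Prop) : atom -> Prop :=
  fun a => exists b, X b /\ act h b = a.

Definition in_ideal (E : atom -> Prop) : Prop :=
  exists S : list nat, forall a, E a -> In (fst a) S.

Definition fixes (h : nat -> R -> R) (E : atom -> Prop) : Prop :=
  forall a, E a -> act h a = a.

(* x has a support in I: some E in I with fix_G(E) included in sym_G(x),
   where "phi(x) = x" is given by the predicate symP. *)
Definition supported (symP : (nat -> R -> R) -> Prop) : Prop :=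
  exists E, in_ideal E /\ forall h, in_G h -> fixes h E -> symP h.

Definition finite_set (X : atom -> Prop) : Prop :=
  exists l : list atom, forall a, X a <-> In a l.
Definition infinite_nat (I : nat -> Prop) : Prop :=
  forall m, exists n, (m <= n)%nat /\ I n.

Definition partial_mcf (I : nat -> Prop) (f : nat -> atom -> Prop) : Prop :=
  infinite_nat I /\
  forall n, I n ->
    finite_set (f n) /\ (exists a, f n a) /\ (forall a, f n a -> A_ n a).

(* phi(f) = f for f = {(n, f n) : n in I}: since phi fixes every natural
   number (pure set), this means phi[f n] = f n for every n in I. *)
Definition sym_pmcf (I : nat -> Prop) (f : nat -> atom -> Prop)
  (h : nat -> R -> R) : Prop :=
  forall n, I n -> forall a, img h (f n) a <-> f n a.

(* All elements
   of TC({f}) other than f itself (naturals, finite sets of atoms, atoms,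
   Kuratowski pairs of these) have supports in I, so f is in N_R iff f is
   symmetric. *)
Definition pmcf_in_N (I : nat -> Prop) (f : nat -> atom -> Prop) : Prop :=
  supported (sym_pmcf I f).

(* Main.v *)
Require Import Defs.
From Stdlib Require Import Reals List Lra Lia.
Open Scope R_scope.

Definition transl (n : nat) (t : R) : nat -> R -> R :=
  fun k x => if Nat.eq_dec k n then x + t else x.

Lemma transl_G n t : in_G (transl n t).
Proof.
  intros k; unfold transl; destruct (Nat.eq_dec k n).
  - split; [intros x y; split; intro; lra | intros y; exists (y - t); ring].
  - split; [intros x y; tauto | intros y; exists y; reflexivity].
Qed.

Lemma transl_fix n t (L : list nat) (E : atom -> Prop) :
  ~ In n L -> (forall a, E a -> In (fst a) L) -> fixes (transl n t) E.
Proof.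
  intros HnS HE [k x] Ha; unfold act, transl; simpl.
  destruct (Nat.eq_dec k n) as [->|]; [exfalso; apply HnS; exact (HE _ Ha) | reflexivity].
Qed.

Lemma notin_big (L : list nat) n : (S (list_max L) <= n)%nat -> ~ In n L.
Proof.
  intros Hn Hin.
  assert (H := proj1 (list_max_le L (list_max L)) (le_n _)).
  rewrite Forall_forall in H; specialize (H _ Hin). lia.
Qed.

Definition bnd (l : list atom) : R := fold_right (fun b acc => Rabs (snd b) + acc) 0 l.

Lemma bnd_pos l : 0 <= bnd l.
Proof. induction l; simpl; [lra|]. pose proof (Rabs_pos (snd a)); lra. Qed.

Lemma bnd_in l b : In b l -> Rabs (snd b) <= bnd l.
Proof.
  induction l; simpl; [tauto|]. intros [->|H].
  - pose proof (bnd_pos l); lra.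
  - pose proof (Rabs_pos (snd a)); specialize (IHl H); lra.
Qed.

Theorem proposition3p9 :
  ((forall m n, (forall a, A_ m a <-> A_ n a) -> m = n) /\
   (forall h, in_G h -> forall n a, img h (A_ n) a <-> A_ n a)) /\
  (forall (I : nat -> Prop) (f : nat -> atom -> Prop),
      partial_mcf I f -> ~ pmcf_in_N I f) /\
  ((forall n, exists g : R -> R,
       (forall x y, g x = g y -> x = y) /\
       supported (fun h => forall x, g (h n x) = g x)) /\
   ~ (exists c : nat -> atom,
        (forall n, A_ n (c n)) /\
        supported (fun h => forall n, act h (c n) = c n))).
Proof.
  split; [split|split; [|split]].
  - intros m n H. apply (proj1 (H (m, 0))). reflexivity.
  - intros h hG n [k y]; unfold img, A_, act; simpl; split.
    + intros [[k' x] [Hb Heq]]. simpl in *. injection Heq; intros; subst; reflexivity.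
    + intros ->. destruct (proj2 (hG n) y) as [x Hx].
      exists (n, x); simpl; split; [reflexivity|rewrite Hx; reflexivity].
  - intros I f [Hinf Hf] [E [[L HS] Hsym]].
    destruct (Hinf (S (list_max L))) as [n [Hn HIn]].
    pose proof (notin_big L n Hn) as HnS.
    destruct (Hf n HIn) as [[l Hl] [[[k x] Ha] HA]].
    pose proof (HA _ Ha) as Hk; unfold A_ in Hk; simpl in Hk; subst k.
    set (t := 2 * bnd l + 1).
    specialize (Hsym (transl n t) (transl_G n t) (transl_fix n t L E HnS HS) n HIn (n, x + t)).
    assert (Hin : f n (n, x + t)).
    { apply Hsym. exists (n, x); split; [exact Ha|].
      unfold act, transl; simpl. destruct (Nat.eq_dec n n); [reflexivity|congruence]. }
    apply Hl in Hin. apply bnd_in in Hin. apply Hl in Ha. apply bnd_in in Ha.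
    simpl in *. unfold t in *.
    pose proof (bnd_pos l).
    pose proof (Rle_abs (x + (2 * bnd l + 1))).
    pose proof (Rabs_le x) as Hb0. pose proof (Rle_abs (- x)). rewrite Rabs_Ropp in *. lra.
  - intros n. exists (fun x => x). split; [auto|].
    exists (A_ n). split.
    + exists (n :: nil). intros a Ha. unfold A_ in Ha. left; auto.
    + intros h _ Hfix x. specialize (Hfix (n, x) eq_refl).
      unfold act in Hfix; simpl in Hfix. injection Hfix; auto.
  - intros [c [Hc [E [[L HS] Hsym]]]].
    remember (S (list_max L)) as n eqn:Hneq.
    specialize (Hsym (transl n 1) (transl_G n 1) (transl_fix n 1 L E (notin_big L n (Nat.eq_le_incl _ _ (eq_sym Hneq))) HS) n).
    specialize (Hc n). destruct (c n) as [k x]. unfold A_ in Hc; simpl in Hc; subst k.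
    unfold act, transl in Hsym;
    simpl in Hsym.
    injection Hsym; intros H1. destruct (Nat.eq_dec n n); [lra|congruence].
Qed.
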